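(* For integers $1\le r\le n$, \[ B_q(n,r)=\frac{[2n-1]!_q\,[2r]_q}{[n+r]!_q\,[n-r]!_q} = \sum_{\pi \in \mathcal{B}(n,r)} q^{\operatorname{maj}(\pi) - \operatorname{des}(\pi)}, \] and also $B_q(n,r)=q^{-(n-r)}\left(\left[{2n-1\atop n+r-1}\right]_q-\left[{2n-1\atop n+r}\right]_q\right)$.
   Context: Let $[r]_q=1+q+\cdots+q^{r-1}$, $[n]!_q=\prod_{r=1}^n[r]_q$, and $\left[{a\atop b}\right]_q$ be the Gaussian binomial coefficient. Paths use up steps $(1,1)$ and down steps $(1,-1)$ and are written as 0-1 sequences $\pi=\pi_1\cdots\pi_\ell$, with $0$ for up and $1$ for down. The descent set is $D(\pi)=\{i:\pi_i>\pi_{i+1}\}$, $\operatorname{maj}(\pi)=\sum_{i\in D(\pi)}i$, and $\operatorname{des}(\pi)=|D(\pi)|$. $\mathcal{B}(n,r)$ is the set of paths of length $2n$ that start at the origin with an up step, end at $(2n,-2r+2)$, and never go below the line $y=-2r+2$. In particular $\mathcal{B}(n,1)$ is the set of Catalan (Dyck) paths of length $2n$. *)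

(* Defs.v *)
(* q-analogues are elements of {poly int}; rational
   expressions in q live in the fraction field {fraction {poly int}}. *)
From HB Require Import structures.
From mathcomp Require Import all_boot all_order all_algebra fraction.
Set Implicit Arguments. Unset Strict Implicit. Unset Printing Implicit Defensive.
Import Order.TTheory GRing.Theory Num.Theory.
Local Open Scope ring_scope.

Notation QF := {fraction {poly int}}.
Notation "x %:F" := (@FracField.tofrac _ x).

Definition qint (r : nat) : {poly int} := \sum_(i < r) 'X^i.
Definition qfact (n : nat) : {poly int} := \prod_(i < n) qint i.+1.
Definition qbinom (a b : nat) : QF :=
  if (b <= a)%N then (qfact a)%:F / ((qfact b)%:F * (qfact (a - b))%:F) else 0.

(* paths: false = up step (0), true = down step (1) *)
(* descent set (1-indexed positions i with pi_i > pi_{i+1}) *)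
Definition desc_set (s : seq bool) : seq nat :=
  [seq i.+1 | i <- iota 0 (size s).-1 & nth false s i && ~~ nth false s i.+1].
Definition maj (s : seq bool) : nat := sumn (desc_set s).
Definition des (s : seq bool) : nat := size (desc_set s).

Definition height (s : seq bool) (k : nat) : int :=
  (count negb (take k s))%:Z - (count id (take k s))%:Z.

Definition inB (n r : nat) (s : seq bool) : bool :=
  [&& size s == (2 * n)%N,
      nth true s 0 == false,
      height s (2 * n) == 2%:Z - (2 * r)%:Z &
      [forall k : 'I_(2 * n).+1, 2%:Z - (2 * r)%:Z <= height s k]].

Definition Bsum (n r : nat) : {poly int} :=
  \sum_(t : (2 * n).-tuple bool | inB n r t) 'X^(maj t - des t).

Definition Bq (n r : nat) : QF :=
  ((qfact (2 * n).-1)%:F * (qint (2 * r))%:F) /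
  ((qfact (n + r))%:F * (qfact (n - r))%:F).

(* Main.v *)
Require Import Defs.
From HB Require Import structures.
From mathcomp Require Import all_boot all_order all_algebra.
From mathcomp Require Import ring zify.
Import Order.TTheory GRing.Theory Num.Theory.
Local Open Scope ring_scope.

Fixpoint allw (m : nat) : seq (seq bool) :=
  if m is m'.+1 then [seq rcons s c | s <- allw m', c <- [:: false; true]] else [:: [::]].

Lemma mem_allw m s : (s \in allw m) = (size s == m).
Proof.
elim: m s => [|m IH] s; first by case: s.
apply/allpairsPdep/idP => [[s' [c [Hs Hc ->]]]|].
  by move: Hs; rewrite IH size_rcons => /eqP ->.
case/lastP: s => [//|s' c]; rewrite size_rcons eqSS => Hs.
by exists s', c; rewrite IH Hs; split => //; case: c.
Qed.

Lemma uniq_allw m : uniq (allw m).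
Proof.
elim: m => [//|m IH] /=; apply: (@allpairs_uniq (seq bool) bool (seq bool) (fun s c => rcons s c) (allw m) [:: false; true] IH isT).
by move=> [s1 c1] [s2 c2] _ _ /= /rcons_inj.
Qed.

Definition hgt (s : seq bool) : int := (count negb s)%:Z - (count id s)%:Z.
Definition floorok (L : nat) (s : seq bool) : bool :=
  all (fun k => - (L%:Z) <= hgt (take k s)) (iota 0 (size s).+1).
Arguments floorok : simpl never.
Arguments hgt : simpl never.

Lemma count_nid s : (count negb s + count id s)%N = size s.
Proof. by elim: s => [//|[] s IH] /=; rewrite ?add0n ?add1n ?addn0 ?addnS ?addSn ?IH. Qed.

Lemma count_rcons (p : pred bool) s c : count p (rcons s c) = (count p s + p c)%N.
Proof. by rewrite -cats1 count_cat /= addn0. Qed.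

Lemma hgt_rcons s c : hgt (rcons s c) = hgt s + (if c then -1 else 1).
Proof. rewrite /hgt !count_rcons; case: c => /=; lia. Qed.

Lemma floorok_rcons L s c :
  floorok L (rcons s c) = floorok L s && (- (L%:Z) <= hgt (rcons s c)).
Proof.
rewrite /floorok size_rcons -(addn1 (size s).+1) iotaD all_cat add0n.
rewrite [all _ (iota _ 1)]/= andbT take_oversize ?size_rcons //.
congr andb; apply: eq_in_all => k; rewrite mem_iota add0n => /andP [_ Hk].
by rewrite -cats1 takel_cat.
Qed.

Lemma desc_set_rcons s c :
  desc_set (rcons s c) = desc_set s ++ (if last false s && ~~ c then [:: size s] else [::]).
Proof.
case/lastP: s => [|s x]; first by [].
rewrite /desc_set !size_rcons (_ : ((size s).+2).-1 = size s + 1)%N; last by rewrite addn1.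
rewrite (_ : ((size s).+1).-1 = size s)%N // iotaD add0n filter_cat map_cat last_rcons.
congr (_ ++ _).
- congr map; apply: eq_in_filter => i; rewrite mem_iota add0n => /andP [_ Hi].
  have h1 : (i < (size s).+1)%N by lia. have h2 : (i.+1 < (size s).+1)%N by lia.
  by rewrite !nth_rcons !size_rcons h1 h2 Hi.
- rewrite /= !nth_rcons !size_rcons ltnSn ltnn eqxx /= ltnn eqxx.
  by case: x; case: c.
Qed.

Lemma maj_rcons s c :
  maj (rcons s c) = (maj s + (if last false s && ~~ c then size s else 0))%N.
Proof. by rewrite /maj desc_set_rcons sumn_cat; case: ifP => _ /=; rewrite ?addn0. Qed.

Lemma allw_rec (R : zmodType) m (P : pred (seq bool)) (F : seq bool -> R) :
  \sum_(w <- allw m.+1 | P w) F w =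
  \sum_(s <- allw m | P (rcons s false)) F (rcons s false) +
  \sum_(s <- allw m | P (rcons s true)) F (rcons s true).
Proof.
rewrite [allw m.+1]/= big_mkcond big_flatten big_map /= [X in _ = X + _]big_mkcond.
rewrite [X in _ = _ + X]big_mkcond -big_split /=.
by apply: eq_bigr => s _; rewrite !big_cons big_nil addr0.
Qed.

Section Comb.
Variables (R : comRingType) (x : R).

Definition G L a b := \sum_(w <- allw (a + b) | (count id w == b) && floorok L w) x ^+ maj w.

Lemma cond_eq m (P1 P2 : pred (seq bool)) (F : seq bool -> R) :
  (forall s, size s = m -> P1 s = P2 s) ->
  \sum_(s <- allw m | P1 s) F s = \sum_(s <- allw m | P2 s) F s.
Proof.
move=> H; rewrite big_seq_cond [RHS]big_seq_cond; apply: eq_bigl => s.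
by rewrite mem_allw; case: eqP => //= /H ->.
Qed.

Lemma fun_eq m (P : pred (seq bool)) (F1 F2 : seq bool -> R) :
  (forall s, size s = m -> P s -> F1 s = F2 s) ->
  \sum_(s <- allw m | P s) F1 s = \sum_(s <- allw m | P s) F2 s.
Proof.
move=> H; rewrite big_seq_cond [RHS]big_seq_cond; apply: eq_bigr => s /andP [].
by rewrite mem_allw => /eqP; apply: H.
Qed.

Lemma Tpart L a b m : (a + b)%N = m.+1 ->
  \sum_(s <- allw m | (count id (rcons s true) == b) && floorok L (rcons s true))
     x ^+ maj (rcons s true) =
  if (0 < b)%N && (b <= a + L)%N then G L a b.-1 else 0.
Proof.
case: b => [|b] H /=.
  by apply: big1 => s; rewrite count_rcons addn1.
rewrite (@cond_eq _ _ (fun s => (count id s == b) && floorok L s && (b.+1 <= a + L)%N)).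
  case: leqP => hb.
    by apply: big1 => s; rewrite andbF.
  rewrite /G (_ : (a + b = m)%N); last by lia.
  apply: eq_big => s; first by rewrite andbT.
  by move=> _; rewrite maj_rcons andbF addn0.
move=> s Hs; rewrite count_rcons floorok_rcons hgt_rcons addn1 eqSS.
case: eqP => //= Hc; congr andb.
have := count_nid s; rewrite /hgt => hn.
apply/idP/idP => h; lia.
Qed.

Lemma Epart L a b m : (a + b)%N = m ->
  \sum_(s <- allw m | (count id s == b) && floorok L s && last false s) x ^+ maj s =
  if (0 < b)%N && (b <= a + L)%N then G L a b.-1 else 0.
Proof.
case: m => [|m] H.
  rewrite (_ : b = 0%N); last by lia.
  by rewrite /= big_cons big_nil andbF.
rewrite (@allw_rec _ m (fun s => (count id s == b) && floorok L s && last false s)) [X in X + _]big1 ?add0r; last by move=> s; rewrite last_rcons andbF.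
under eq_bigl => s do rewrite last_rcons andbT.
exact: Tpart.
Qed.

Lemma Fpart L a b m : (a + b)%N = m.+1 ->
  \sum_(s <- allw m | (count id (rcons s false) == b) && floorok L (rcons s false))
     x ^+ maj (rcons s false) =
  if (0 < a)%N && (b <= a + L)%N then
    G L a.-1 b + (x ^+ m - 1) * (if (0 < b)%N && (b <= a.-1 + L)%N then G L a.-1 b.-1 else 0)
  else 0.
Proof.
case: a => [|a] H.
  rewrite big_seq_cond; apply: big1 => s /andP [hm /andP [hc _]]; exfalso.
  move: hm hc; rewrite mem_allw count_rcons addn0 => /eqP hm /eqP hc.
  have := count_size id s; rewrite hc hm; lia.
rewrite (@cond_eq _ _ (fun s => (count id s == b) && floorok L s && (b <= a.+1 + L)%N)); last first.
  move=> s Hs; rewrite count_rcons floorok_rcons hgt_rcons addn0.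
  case: eqP => //= Hc; congr andb.
  have := count_nid s; rewrite /hgt => hn.
  apply/idP/idP => h; lia.
have [hb|hb] := boolP (b <= a.+1 + L)%N; last first.
  by rewrite andbF; apply: big1 => s; rewrite andbF.
rewrite /=.
under eq_bigl => s do rewrite andbT.
rewrite (@fun_eq _ _ _ (fun s => x ^+ maj s + (if last false s then (x ^+ m - 1) * x ^+ maj s else 0))); last first.
  move=> s Hs _; rewrite maj_rcons andbT Hs; case: (last false s); rewrite ?addn0 ?mulr0 ?addr0 //.
  by rewrite exprD; ring.
rewrite big_split /= -big_mkcondr -mulr_sumr.
rewrite (@Epart L a b m); last by lia.
by rewrite /G (_ : (a + b = m)%N); last by lia.
Qed.

Lemma G_rec L a b m : (a + b)%N = m.+1 ->
  G L a b = (if (0 < b)%N && (b <= a + L)%N then G L a b.-1 else 0) +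
    (if (0 < a)%N && (b <= a + L)%N then
       G L a.-1 b + (x ^+ m - 1) * (if (0 < b)%N && (b <= a.-1 + L)%N then G L a.-1 b.-1 else 0)
     else 0).
Proof.
move=> H; rewrite {1}/G H (@allw_rec _ m (fun w => (count id w == b) && floorok L w)) addrC (Tpart _ _ _ _ H) (Fpart _ _ _ _ H).
done. Qed.
End Comb.

Arguments G {R}.

Lemma G00 (R : comRingType) (x : R) L : G x L 0 0 = 1.
Proof.
rewrite /G /= big_cons big_nil /=.
have -> : floorok L [::] by rewrite /floorok /= andbT /hgt /=; lia.
by rewrite addr0.
Qed.

Lemma iotaSmap m n : iota m.+1 n = map S (iota m n).
Proof. by elim: n m => //= n IH m; rewrite IH. Qed.

Lemma sumn_mapS D : sumn (map S D) = (sumn D + size D)%N.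
Proof. by elim: D => //= d D ->; lia. Qed.

Lemma desc_set_cons w : desc_set (false :: w) = map S (desc_set w).
Proof.
case: w => [//|x w].
rewrite /desc_set [size _]/= [(size (_ :: _)).-1]/= [iota 0 _.+1]/= iotaSmap.
rewrite [filter _ (0%N :: _)]/= filter_map map_comp.
by congr map.
Qed.

Lemma maj_des_cons w : (maj (false :: w) - des (false :: w))%N = maj w.
Proof. by rewrite /maj /des desc_set_cons sumn_mapS size_map addnK. Qed.

Lemma tuple_allw (R : zmodType) m (P : pred (seq bool)) (F : seq bool -> R) :
  \sum_(u : m.-tuple bool | P u) F u = \sum_(s <- allw m | P s) F s.
Proof.
rewrite -(big_map (@tval m bool) P F).
apply: perm_big; apply: uniq_perm.
- by rewrite (map_inj_uniq val_inj) index_enum_uniq.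
- exact: uniq_allw.
move=> s; rewrite mem_allw; apply/mapP/idP => [[u _ ->]|/eqP Hs].
  by rewrite size_tuple.
have Hs' : size s == m by apply/eqP.
by exists (Tuple Hs'); rewrite ?mem_index_enum.
Qed.

Lemma inB_cons n r w : (1 <= r)%N -> (r <= n)%N -> size w = (2 * n).-1 ->
  inB n r (false :: w) = (count id w == (n + r).-1) && floorok (2 * r).-1 w.
Proof.
move=> hr hrn hw.
have e : ((2 * n).-1.+1 = 2 * n)%N by lia.
rewrite /inB /= hw e eqxx /=.
have Hn := count_nid w.
congr andb.
  rewrite /height take_oversize /=; last by rewrite hw e.
  apply/eqP/eqP => h; lia.
apply/forallP/allP => [H k|H [k hk]].
  rewrite mem_iota add0n hw => /andP [_ hk].
  have hk' : (k.+1 < (2 * n).+1)%N by lia.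
  move: (H (Ordinal hk')); rewrite /height /= /hgt; lia.
case: k hk => [|k] hk.
  rewrite /height /=; lia.
have hm : k \in iota 0 (size w).+1 by rewrite mem_iota add0n hw; lia.
move: (H k hm); rewrite /height /= /hgt; lia.
Qed.

Lemma cons_allw (R : comRingType) (x : R) n r : (1 <= r)%N -> (r <= n)%N ->
  \sum_(s <- allw (2 * n) | inB n r s) x ^+ (maj s - des s)%N = G x (2 * r).-1 (n - r) (n + r).-1.
Proof.
move=> hr hrn.
rewrite -big_filter.
rewrite (perm_big (map (cons false) [seq w <- allw (2 * n).-1 | (count id w == (n + r).-1) && floorok (2 * r).-1 w])).
  rewrite big_map big_filter /G (_ : (n - r + (n + r).-1 = (2 * n).-1)%N); last by lia.
  by apply: eq_bigr => w _; rewrite maj_des_cons.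
apply: uniq_perm.
- by rewrite filter_uniq ?uniq_allw.
- by rewrite (map_inj_uniq (fun a b (h : false :: a = false :: b) => ltac:(by case: h))) filter_uniq ?uniq_allw.
move=> s; rewrite mem_filter mem_allw.
case: s => [|c w].
  rewrite (_ : (size [::] == 2 * n) = false); last by apply/eqP; rewrite /=; lia.
  by rewrite andbF; apply/esym/mapP => -[].
case: c.
  have -> : inB n r (true :: w) = false by rewrite /inB; apply/negP; case/and4P.
  by rewrite andFb; apply/esym/mapP => -[y _ []].
rewrite mem_map; last by move=> a b [].
rewrite mem_filter mem_allw /=.
have [hw|hw] := eqVneq (size w) (2 * n).-1.
  rewrite inB_cons // hw (_ : ((2 * n).-1.+1 == 2 * n) = true) ?andbT ?eqxx //.
  apply/eqP; lia.
rewrite andbF (_ : ((size w).+1 == 2 * n) = false) ?andbF //.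
apply/negbTE; apply: contra hw => /eqP h; apply/eqP; lia.
Qed.

Section Alg.
Variables (F : fieldType) (t : F) (qi f : nat -> F).
Hypothesis f0 : f 0 = 1.
Hypothesis fS : forall k, f k.+1 = f k * qi k.+1.
Hypothesis fnz : forall k, f k != 0.
Hypothesis qiD : forall x y, qi (x + y) = qi y + t ^+ y * qi x.
Hypothesis qiM : forall k, t ^+ k = 1 + (t - 1) * qi k.

Lemma qinz k : qi k.+1 != 0.
Proof.
have := fnz k.+1; rewrite fS; apply: contra => /eqP ->; by rewrite mulr0.
Qed.

Definition Q m k := if (k <= m)%N then f m / (f k * f (m - k)) else 0.

Lemma Q_small m k : (m < k)%N -> Q m k = 0.
Proof. by rewrite /Q ltnNge => /negbTE ->. Qed.

Lemma Qexpl k j : Q (k + j) k = f (k + j) / (f k * f j).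
Proof. by rewrite /Q leq_addr addKn. Qed.

Lemma Q0 m : Q m 0 = 1.
Proof. rewrite -[in Q m](add0n m) Qexpl f0 add0n mul1r divff //. Qed.

Lemma Qdiag m : Q m m = 1.
Proof. rewrite -[in Q m](addn0 m) Qexpl f0 addn0 mulr1 divff //. Qed.

Lemma core M K : Q M.+2 K.+1 = Q M.+1 K.+1 + Q M.+1 K + (t ^+ M.+1 - 1) * Q M K.
Proof.
case: (leqP K M) => HKM.
- have [j ->] : exists j, M = (K + j)%N by exists (M - K)%N; rewrite subnKC.
  have -> : Q (K + j).+2 K.+1 = f (K + j).+2 / (f K.+1 * f j.+1).
    by rewrite (_ : (K + j).+2 = K.+1 + j.+1)%N ?Qexpl //; lia.
  have -> : Q (K + j).+1 K.+1 = f (K + j).+1 / (f K.+1 * f j).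
    by rewrite (_ : (K + j).+1 = K.+1 + j)%N ?Qexpl //; lia.
  have -> : Q (K + j).+1 K = f (K + j).+1 / (f K * f j.+1).
    by rewrite (_ : (K + j).+1 = K + j.+1)%N ?Qexpl //; lia.
  rewrite Qexpl !fS.
  have -> : qi (K + j).+2 = qi j.+1 + t ^+ j.+1 * qi K.+1.
    by rewrite -qiD; congr qi; lia.
  rewrite [t ^+ j.+1]qiM [t ^+ (K + j).+1]qiM.
  have h1 := qinz K. have h2 := qinz j. have h3 := qinz (K + j).
  have h4 := fnz K. have h5 := fnz j. have h6 := fnz (K + j).
  field. by rewrite ?h1 ?h2 ?h3 ?h4 ?h5 ?h6.
- case: (ltngtP K M.+1) => HK; first by exfalso; lia.
  + rewrite !Q_small ?mulr0 ?addr0 //; lia.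
  + subst K. rewrite Qdiag Qdiag (Q_small M.+1 M.+2) ?(Q_small M M.+1) //.
    ring.
Qed.

Definition C L a b := Q (a + b) a - t ^+ L.+1 * Q (a + b) (a + L.+1).

Lemma Crec L a b : C L a.+1 b.+1 = C L a.+1 b + C L a b.+1 + (t ^+ (a + b).+1 - 1) * C L a b.
Proof.
rewrite /C !addSn !addnS (core (a + b) a) (core (a + b) (a + L).+1). ring.
Qed.

Lemma Cbd L A : C L A (A + L).+1 + (t ^+ (A + (A + L)).+1 - 1) * C L A (A + L) = 0.
Proof.
rewrite /C; case: A => [|A].
- rewrite !add0n Q0 Q0 Qdiag Q_small //. ring.
- rewrite Qexpl.
  have -> : Q (A.+1 + (A.+1 + L).+1) (A.+1 + L.+1) = f (A.+1 + (A.+1 + L).+1) / (f (A.+1 + L).+1 * f A.+1).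
    rewrite (_ : (A.+1 + (A.+1 + L).+1 = (A.+1 + L.+1) + A.+1)%N); last by lia.
    rewrite Qexpl; congr (f _ / (f _ * _)); lia.
  rewrite Qexpl.
  have -> : Q (A.+1 + (A.+1 + L)) (A.+1 + L.+1) = f (A.+1 + (A.+1 + L)) / (f (A.+1 + L).+1 * f A).
    rewrite (_ : (A.+1 + (A.+1 + L) = (A.+1 + L.+1) + A)%N); last by lia.
    rewrite Qexpl; congr (f _ / (f _ * _)); lia.
  rewrite [(A.+1 + (A.+1 + L).+1)%N]addnS !fS.
  have eb : qi (A.+1 + L).+1 = qi L.+1 + t ^+ L.+1 * qi A.+1 by rewrite -qiD addnS.
  have hb := qinz (A.+1 + L).
  rewrite eb [t ^+ L.+1]qiM in hb *.
  rewrite [t ^+ (A.+1 + (A.+1 + L)).+1]qiM.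
  have h1 := qinz A. have h4 := fnz A. have h5 := fnz (A.+1 + L). have h6 := fnz (A.+1 + (A.+1 + L)).
  field. by rewrite ?h1 ?h4 ?hb ?qinz ?fnz.
Qed.

Lemma B1 n r : (1 <= r)%N -> (r <= n)%N ->
  (f (2 * n).-1 * qi (2 * r)) / (f (n + r) * f (n - r)) = C (2 * r).-1 (n - r) (n + r).-1.
Proof.
move=> hr hrn.
have [s ?] : exists s, r = s.+1 by exists r.-1; lia. subst r.
have [d ->] : exists d, n = (s.+1 + d)%N by exists (n - s.+1)%N; lia.
rewrite /C.
case: d => [|e].
- rewrite (_ : (s.+1 + 0 - s.+1 = 0)%N); last by lia.
  rewrite (_ : (0 + (s.+1 + 0 + s.+1).-1 = (2 * (s.+1 + 0)).-1)%N); last by lia.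
  rewrite Q0 Q_small; last by lia.
  rewrite (_ : (s.+1 + 0 + s.+1 = (2 * (s.+1 + 0)).-1.+1)%N); last by lia.
  rewrite (_ : (2 * s.+1 = (2 * (s.+1 + 0)).-1.+1)%N); last by lia.
  rewrite fS f0. have := fnz (2 * (s.+1 + 0)).-1. have := qinz (2 * (s.+1 + 0)).-1.
  move=> h1 h2. field. by rewrite h1 h2.
- set N := (2 * (s.+1 + e.+1)).-1.
  have eN : N = (e.+1 + (s + s + e).+2)%N by rewrite /N; lia.
  rewrite (_ : (s.+1 + e.+1 - s.+1 = e.+1)%N); last by lia.
  rewrite (_ : (e.+1 + (s.+1 + e.+1 + s.+1).-1 = N)%N); last by rewrite eN; lia.
  rewrite (_ : ((2 * s.+1).-1.+1 = (s + s).+2)%N); last by lia.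
  have -> : Q N e.+1 = f N / (f e.+1 * f (s + s + e).+2) by rewrite eN Qexpl.
  have -> : Q N (e.+1 + (s + s).+2) = f N / (f (s + s + e).+3 * f e).
    rewrite (_ : N = (e.+1 + (s + s).+2) + e)%N; last by rewrite eN; lia.
    rewrite Qexpl; congr (f _ / (f _ * _)); lia.
  rewrite (_ : (s.+1 + e.+1 + s.+1 = (s + s + e).+3)%N); last by lia.
  rewrite (_ : (2 * s.+1 = (s + s).+2)%N); last by lia.
  rewrite [f (s + s + e).+3]fS [f e.+1]fS.
  have eb : qi (s + s + e).+3 = qi (s + s).+2 + t ^+ (s + s).+2 * qi e.+1.
    rewrite -qiD; congr qi; lia.
  have hb := qinz (s + s + e).+2. rewrite eb in hb *.
  have h1 := qinz e. have h2 := fnz e. have h3 := fnz (s + s + e).+2.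
  field. by rewrite ?h1 ?h2 ?h3 ?hb.
Qed.

Lemma B2 n r : t != 0 -> (1 <= r)%N -> (r <= n)%N ->
  (f (2 * n).-1 * qi (2 * r)) / (f (n + r) * f (n - r)) =
  (t ^+ (n - r))^-1 * (Q (2 * n).-1 (n + r).-1 - Q (2 * n).-1 (n + r)).
Proof.
move=> tnz hr hrn.
have [s ?] : exists s, r = s.+1 by exists r.-1; lia. subst r.
have [d ->] : exists d, n = (s.+1 + d)%N by exists (n - s.+1)%N; lia.
case: d => [|e].
- rewrite (_ : (s.+1 + 0 - s.+1 = 0)%N); last by lia.
  rewrite (_ : ((s.+1 + 0 + s.+1).-1 = (2 * (s.+1 + 0)).-1)%N); last by lia.
  rewrite Qdiag Q_small; last by lia.
  rewrite (_ : (s.+1 + 0 + s.+1 = (2 * (s.+1 + 0)).-1.+1)%N); last by lia.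
  rewrite (_ : (2 * s.+1 = (2 * (s.+1 + 0)).-1.+1)%N); last by lia.
  rewrite fS f0. have := fnz (2 * (s.+1 + 0)).-1. have := qinz (2 * (s.+1 + 0)).-1.
  move=> h1 h2. rewrite expr0 invr1. field. by rewrite ?h1 ?h2.
- set N := (2 * (s.+1 + e.+1)).-1.
  have eN : N = (e.+1 + (s + s + e).+2)%N by rewrite /N; lia.
  rewrite (_ : (s.+1 + e.+1 - s.+1 = e.+1)%N); last by lia.
  have -> : Q N (s.+1 + e.+1 + s.+1).-1 = f N / (f (s + s + e).+2 * f e.+1).
    rewrite (_ : N = (s.+1 + e.+1 + s.+1).-1 + e.+1)%N; last by rewrite eN; lia.
    rewrite Qexpl; congr (f _ / (f _ * _)); lia.
  have -> : Q N (s.+1 + e.+1 + s.+1) = f N / (f (s + s + e).+3 * f e).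
    rewrite (_ : N = (s.+1 + e.+1 + s.+1) + e)%N; last by rewrite eN; lia.
    rewrite Qexpl; congr (f _ / (f _ * _)); lia.
  rewrite (_ : (s.+1 + e.+1 + s.+1 = (s + s + e).+3)%N); last by lia.
  rewrite (_ : (2 * s.+1 = (s + s).+2)%N); last by lia.
  rewrite [f (s + s + e).+3]fS [f e.+1]fS.
  have eb : qi (s + s + e).+3 = qi e.+1 + t ^+ e.+1 * qi (s + s).+2.
    rewrite -qiD; congr qi; lia.
  have hb := qinz (s + s + e).+2. rewrite eb in hb *.
  have h1 := qinz e. have h2 := fnz e. have h3 := fnz (s + s + e).+2.
  have h4 : t ^+ e.+1 != 0 by rewrite expf_neq0.
  field. by rewrite ?h1 ?h2 ?h3 ?hb ?h4.
Qed.

Lemma Gval L m : forall a b, (a + b <= m)%N -> G t L a b = if (b <= a + L)%N then C L a b else 0.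
Proof.
elim: m => [|m IH] a b Hab.
  have ha : a = 0%N by lia. have hb : b = 0%N by lia. subst a b.
  rewrite G00 leq0n /C Q0 Q_small //; ring.
have [Hle|Heq] : (a + b <= m)%N \/ (a + b = m.+1)%N by lia.
  exact: IH.
rewrite (@G_rec _ t L _ _ _ Heq).
have [hb|hb] := boolP (b <= a + L)%N; last by rewrite !andbF addr0.
rewrite !andbT.
clear Hab; case: a Heq hb => [|a] Heq hb.
  case: b Heq hb => [|b] Heq hb; first by [].
  rewrite /= addr0 (IH 0%N b); last by lia.
  rewrite (_ : (b <= 0 + L)%N); last by lia.
  rewrite /C Q0 Q0 Q_small ?Q_small //; lia.
case: b Heq hb => [|b] Heq hb.
  rewrite /= add0r mulr0 addr0 (IH a 0%N); last by lia.
  rewrite leq0n /C !addn0 !Qdiag !Q_small //; lia.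
rewrite /= (IH a.+1 b); last by lia.
rewrite (_ : (b <= a.+1 + L)%N); last by lia.
rewrite (IH a b.+1); last by lia.
rewrite (IH a b); last by lia.
rewrite (_ : m = (a + b).+1); last by lia.
have [hb'|hb'] := boolP (b.+1 <= a + L)%N.
  rewrite (_ : (b <= a + L)%N); last by lia.
  rewrite Crec; ring.
have eb : b = (a + L)%N by lia.
rewrite mulr0 add0r addr0 Crec -addrA.
have := Cbd L a; rewrite -eb => ->.
by rewrite addr0.
Qed.
End Alg.

Lemma qint_S k : qint k.+1 = qint k + 'X^k.
Proof. by rewrite /qint big_ord_recr. Qed.

Lemma qint_M k : 'X^k = 1 + ('X - 1) * qint k :> {poly int}.
Proof.
elim: k => [|k IH]; first by rewrite /qint big_ord0 expr0 mulr0 addr0.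
rewrite qint_S exprS IH; ring.
Qed.

Lemma qint_D x y : qint (x + y) = qint y + 'X^y * qint x.
Proof.
rewrite /qint addnC big_split_ord /= mulr_sumr; congr (_ + _).
by apply: eq_bigr => i _; rewrite exprD.
Qed.

Lemma qfact_S k : qfact k.+1 = qfact k * qint k.+1.
Proof. by rewrite /qfact big_ord_recr. Qed.

Lemma qint_nz k : qint k.+1 != 0.
Proof.
apply/eqP => h; have := qint_M k.+1; rewrite h mulr0 addr0 => h2; have := congr1 (fun p : {poly int} => size p) h2 => /=.
by rewrite size_polyXn size_poly1.
Qed.

Lemma qfact_nz k : qfact k != 0.
Proof.
elim: k => [|k IH]; first by rewrite /qfact big_ord0 oner_neq0.
by rewrite qfact_S mulf_neq0 // qint_nz.
Qed.

Definition tX : QF := ('X)%:F.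
Definition qiF k : QF := (qint k)%:F.
Definition fF k : QF := (qfact k)%:F.

Lemma hf0 : fF 0 = 1.
Proof. by rewrite /fF /qfact big_ord0 rmorph1. Qed.

Lemma hfS k : fF k.+1 = fF k * qiF k.+1.
Proof. by rewrite /fF qfact_S rmorphM. Qed.

Lemma hfnz k : fF k != 0.
Proof. by rewrite /fF tofrac_eq0 qfact_nz. Qed.

Lemma hqiD x y : qiF (x + y) = qiF y + tX ^+ y * qiF x.
Proof. by rewrite /qiF qint_D rmorphD rmorphM rmorphXn. Qed.

Lemma hqiM k : tX ^+ k = 1 + (tX - 1) * qiF k.
Proof. by rewrite /tX -rmorphXn qint_M rmorphD rmorphM rmorphB rmorph1. Qed.

Lemma htnz : tX != 0.
Proof. by rewrite /tX tofrac_eq0 polyX_eq0. Qed.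

Theorem theorem1 (n r : nat) (hr1 : (1 <= r)%N) (hrn : (r <= n)%N) :
  Bq n r = (Bsum n r)%:F /\
  Bq n r = ('X^(n - r))%:F^-1 *
           (qbinom (2 * n).-1 (n + r).-1 - qbinom (2 * n).-1 (n + r)).
Proof.
split.
  have -> : Bq n r = C QF tX fF (2 * r).-1 (n - r) (n + r).-1.
    exact: (@B1 _ tX qiF fF hf0 hfS hfnz hqiD n r hr1 hrn).
  rewrite /Bsum rmorph_sum /=.
  rewrite (eq_bigr (fun s : (2 * n).-tuple bool => tX ^+ (maj s - des s)%N)); last first.
    by move=> s _; rewrite rmorphXn.
  rewrite (@tuple_allw _ (2 * n) (fun s => inB n r s) (fun s => tX ^+ (maj s - des s)%N)).
  rewrite (@cons_allw _ tX n r hr1 hrn) (@Gval _ tX qiF fF hf0 hfS hfnz hqiD hqiM _ _ _ _ (leqnn _)).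
  by rewrite (_ : ((n + r).-1 <= n - r + (2 * r).-1)%N) //; lia.
rewrite rmorphXn.
exact: (@B2 _ tX qiF fF hf0 hfS hfnz hqiD n r htnz hr1 hrn).
Qed.
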